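(* If $x,y\in X$ satisfy $\deg(x)=i$ and $\deg(y)=i+1$ for some positive integer $i$, then the pair $x,y$ is not asymptotic, i.e. $\limsup_{n\to\infty}d(T^n(x),T^n(y))>0$.
   Context: Paths and cycles: a graph is $G=(V,E)$ with $V$ finite and $E\subset V\times V$. A path is a finite sequence of vertices $(u_0,\dots,u_L)$ with $(u_j,u_{j+1})\in E$; its length is $|\cdot|=L$; a cycle is a path with $u_0=u_L$. For paths where one ends where the next starts, $+$ denotes concatenation and $a\,c$ means the cycle $c$ traversed $a$ times. Construction: $G_0=(V_0,E_0)$ with $V_0=\{v_{0,0}\}$, $E_0=\{e_{0,0}\}$, $e_{0,0}=(v_{0,0},v_{0,0})$. For $n\geq1$, $G_n=(V_n,E_n)$ consists of a vertex $v_{n,0}$, the loop $e_{n,0}=(v_{n,0},v_{n,0})$, and $n$ cycles $c_{n,1},\dots,c_{n,n}$, each starting and ending at $v_{n,0}$, whose vertices other than $v_{n,0}$ are pairwise distinct (within each cycle and across cycles); $V_n$ is the set of all these vertices and $E_n$ consists of $e_{n,0}$ and the edges of the cycles. The maps $\varphi_n\colon V_{n+1}\to V_n$ and the lengths of the cycles $c_{n+1,i}$ are defined together: $\varphi_n(v_{n+1,0})=v_{n,0}$, and for each $i$ a path $P_{n,i}$ in $G_n$ from $v_{n,0}$ to $v_{n,0}$ is given; $c_{n+1,i}$ has length $|P_{n,i}|$ and $\varphi_n$ maps its $j$-th vertex to the $j$-th vertex of $P_{n,i}$ (written $\varphi_n(c_{n+1,i})=P_{n,i}$). The paths are: $P_{0,1}=10\,e_{0,0}$;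 for $n\geq1$: $P_{n,i}=e_{n,0}+2c_{n,i}+2c_{n,i+1}+\dots+2c_{n,n}+e_{n,0}$ for $2\leq i\leq n$; $P_{n,n+1}=(n+2)^2\big(\sum_{i=1}^n|c_{n,i}|\big)\,e_{n,0}$; and $P_{n,1}=(1\,e_{n,0}+2c_{n,1})+(2\,e_{n,0}+2c_{n,1})+\dots+(k_n\,e_{n,0}+2c_{n,1})+e_{n,0}+2c_{n,2}+\dots+2c_{n,n}+e_{n,0}$, where $k_n=2\big(1+\sum_{i=1}^n|c_{n,i}|\big)$. Let $X=\{x\in\prod_{n\geq0}V_n:\varphi_n(x_{n+1})=x_n\ \forall n\}$ with metric $d(x,y)=2^{-\min\{i:x_i\neq y_i\}}$ ($d(x,x)=0$); $X$ is a compact zero-dimensional metric space, and $T\colon X\to X$ defined by $T(x)=y$ iff $(x_n,y_n)\in E_n$ for all $n$ is a well-defined homeomorphism. Write $x_n$ for the $n$-th coordinate of $x$. Degree: for $v\in V_n$, $\deg(v)=+\infty$ if $v=v_{n,0}$ and $\deg(v)=i$ if $v$ is a vertex of $c_{n,i}$ different from $v_{n,0}$; for $x\in X$, $\deg(x)=\min_n\deg(x_n)$. *)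

(* Defs.v *)
From HB Require Import structures.
From mathcomp Require Import all_boot all_order all_algebra.
From Stdlib Require Import ClassicalEpsilon.
Set Implicit Arguments. Unset Strict Implicit. Unset Printing Implicit Defensive.
Import Order.TTheory GRing.Theory Num.Theory.

(* Vertices of G_n are encoded as pairs of naturals:
   (0,0)  is the base vertex v_{n,0};
   (i,j)  with 1 <= i <= n, 1 <= j < |c_{n,i}|  is the j-th vertex of c_{n,i}. *)
Definition V := (nat * nat)%type.
Definition center : V := (0%N, 0%N).

(* A closed path (u_0,...,u_L) based at the base vertex is encoded by the word
   [u_0; ...; u_{L-1}] (u_L is the base vertex); concatenation of closed paths
   is then list concatenation and the length is [size]. *)

(* word of the cycle c_{n,k} given the list ls = [|c_{n,1}|; ...; |c_{n,n}|] *)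
Definition cyc_word (ls : seq nat) (k : nat) : seq V :=
  [seq (if j == 0%N then center else (k, j)) | j <- iota 0 (nth 0%N ls k.-1)].

Definition Pword (n : nat) (ls : seq nat) (i : nat) : seq V :=
  let e := [:: center] in
  let twoc k := cyc_word ls k ++ cyc_word ls k in
  if n == 0%N then nseq 10 center
  else if i == n.+1 then nseq ((n + 2) ^ 2 * sumn ls) center
  else if i == 1%N then
    let kn := 2 * (1 + sumn ls) in
    flatten [seq nseq j center ++ twoc 1%N | j <- iota 1 kn]
      ++ e ++ flatten [seq twoc k | k <- iota 2 (n - 1)] ++ e
  else e ++ flatten [seq twoc k | k <- iota i (n - i + 1)] ++ e.

(* lens n = [|c_{n,1}|; ...; |c_{n,n}|],  with |c_{n+1,i}| = |P_{n,i}| *)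
Fixpoint lens (n : nat) : seq nat :=
  match n with
  | 0 => [::]
  | n'.+1 => [seq size (Pword n' (lens n') i) | i <- iota 1 n'.+1]
  end.

Definition Lcyc (n i : nat) : nat := nth 0%N (lens n) i.-1.

Definition inV (n : nat) (v : V) : bool :=
  (v == center) || ((0 < v.1 <= n) && (0 < v.2 < Lcyc n v.1))%N.

Definition cv (n i j : nat) : V :=
  if (j == 0%N) || (j == Lcyc n i) then center else (i, j).

Definition edge (n : nat) (u w : V) : bool :=
  ((u == center) && (w == center)) ||
  has (fun i => has (fun j => (u == cv n i j) && (w == cv n i j.+1))
                    (iota 0 (Lcyc n i))) (iota 1 n).

Definition phi (n : nat) (v : V) : V :=
  if v == center then center else nth center (Pword n (lens n) v.1) v.2.

Definition inX (x : nat -> V) : Prop :=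
  forall n, inV n (x n) /\ phi n (x n.+1) = x n.

Definition Trel (x y : nat -> V) : Prop := forall n, edge n (x n) (y n).

Definition is_orbit (x : nat -> V) (xs : nat -> nat -> V) : Prop :=
  xs 0%N = x /\ forall k, inX (xs k) /\ Trel (xs k) (xs k.+1).

(* degree of a vertex: None = +infinity *)
Definition vdeg (v : V) : option nat := if v == center then None else Some v.1.

Definition has_deg (x : nat -> V) (i : nat) : Prop :=
  (exists n, vdeg (x n) = Some i) /\
  (forall n m, vdeg (x n) = Some m -> (i <= m)%N).

Definition dist (x y : nat -> V) : rat :=
  match excluded_middle_informative (exists i, (fun k => x k != y k) i) with
  | left H => ((2%:R : rat) ^+ (ex_minn H))^-1
  | right _ => 0%R
  end.

(* Main.v *)
Require Import Defs.
From HB Require Import structures.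
From mathcomp Require Import all_boot all_order all_algebra.
From mathcomp Require Import zify.
From Stdlib Require Import ClassicalEpsilon Classical.
Set Implicit Arguments. Unset Strict Implicit. Unset Printing Implicit Defensive.

Definition tw (ls : seq nat) (k : nat) : seq V := cyc_word ls k ++ cyc_word ls k.

Lemma size_cw ls k : size (cyc_word ls k) = nth 0 ls k.-1.
Proof. by rewrite /cyc_word size_map size_iota. Qed.

Lemma nth_cw ls k s : s < nth 0 ls k.-1 ->
  nth center (cyc_word ls k) s = if s == 0 then center else (k, s).
Proof. move=> h. by rewrite /cyc_word (nth_map 0) ?size_iota // nth_iota. Qed.

Lemma all_cw ls k : all (fun v => (v == center) || (v.1 == k)) (cyc_word ls k).
Proof. apply/allP=> v /mapP [j _ ->]. by case: ifP => _ //=; rewrite eqxx orbT. Qed.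

Lemma size_tw ls k : size (tw ls k) = 2 * nth 0 ls k.-1.
Proof. rewrite /tw size_cat size_cw; lia. Qed.

Lemma P_gen n ls i : n != 0 -> i != n.+1 -> i != 1 ->
  Pword n ls i = center :: flatten [seq tw ls k | k <- iota i (n - i + 1)] ++ [:: center].
Proof. move=> h1 h2 h3. by rewrite /Pword (negbTE h1) (negbTE h2) (negbTE h3). Qed.

Lemma P_one n ls : n != 0 ->
  Pword n ls 1 = flatten [seq nseq j center ++ tw ls 1 | j <- iota 1 (2 * (1 + sumn ls))]
     ++ center :: flatten [seq tw ls k | k <- iota 2 (n - 1)] ++ [:: center].
Proof. by case: n. Qed.

Lemma P_last n ls : n != 0 -> Pword n ls n.+1 = nseq ((n + 2) ^ 2 * sumn ls) center.
Proof. move=> h1. by rewrite /Pword (negbTE h1) eqxx. Qed.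

Lemma all_deg n ls j : 2 <= j ->
  all (fun v => (v == center) || (j <= v.1)) (Pword n ls j).
Proof.
move=> hj.
have allC : forall m j', all (fun v => (v == center) || (j' <= v.1)) (nseq m center).
  by move=> m j'; apply/allP=> v /nseqP [-> _]; rewrite eqxx.
case: (eqVneq n 0) => [->|n0]; first by rewrite /Pword /=.
case: (eqVneq j n.+1) => [->|jn]; first by rewrite P_last // allC.
have j1 : j != 1 by apply/eqP => e; rewrite e in hj.
rewrite P_gen // /= all_cat /= andbT; apply/allP=> v.
move/flattenP=> [w /mapP [k kin ->]] vin.
move: kin; rewrite mem_iota => /andP [jk _].
rewrite /tw mem_cat in vin.
have := allP (all_cw ls k) v.
case/orP: vin => vin; move=> /(_ vin) /orP [->//|/eqP ->]; by rewrite jk orbT.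
Qed.


Section Core.
Variables (i L : nat) (cw : seq V).
Hypothesis hi : 0 < i.
Hypothesis hsz : size cw = L.
Hypothesis hnth : forall s, s < L -> nth center cw s = if s == 0 then center else (i, s).

Definition blk j := nseq j center ++ cw ++ cw.

Lemma size_blk j : size (blk j) = j + L + L.
Proof. rewrite /blk !size_cat size_nseq hsz; lia. Qed.

Lemma nth_blk j p : p < j + L + L ->
  nth center (blk j) p = if p < j then center
      else if p < j + L then nth center cw (p - j) else nth center cw (p - j - L).
Proof.
move=> h; rewrite /blk nth_cat size_nseq.
case: ltnP => h1; first by rewrite nth_nseq h1.
rewrite nth_cat hsz. case: ltnP => h2; case: ltnP => h3 //; try lia.
Qed.

Lemma cw_eq s p' : s < L -> nth center cw s = (i, p') -> s = p' /\ 0 < s.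
Proof.
move=> h; rewrite hnth //. case: eqP. move=> _ [e _]. by move: hi; rewrite -e. move=> /eqP ne [e]. subst. split; lia. 

Qed.

Lemma core js : js != [::] ->
  forall p p', p < size (flatten [seq blk j | j <- js]) ->
  nth center (flatten [seq blk j | j <- js]) p = (i, p') ->
  p + (L - p') <= size (flatten [seq blk j | j <- js]) /\
  (size (flatten [seq blk j | j <- js]) - p <= L - p' \/
   forall s0, 0 < s0 < L -> exists P, p + (L - p') <= P < size (flatten [seq blk j | j <- js])
        /\ nth center (flatten [seq blk j | j <- js]) P = (i, s0)).
Proof.
elim: js => [//|j js IH] _ p p'.
rewrite /= size_cat size_blk nth_cat size_blk.
set F := flatten _.
move=> hp; case: (ltnP p (j + L + L)) => hpb.
- rewrite nth_blk //.
  case: ltnP => h1; first by move=> /(congr1 fst) /= e; move: hi; rewrite -e.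
  case: ltnP => h2.
  + move/cw_eq => []; first lia.
    move=> e1 e2. split; first lia. right=> s0 hs0.
    exists (j + L + s0); split; first lia.
    rewrite nth_cat size_blk ifT; last lia.
    rewrite nth_blk; last lia.
    rewrite ifF; last lia. rewrite ifF; last lia.
    rewrite hnth; last lia. have -> : j + L + s0 - j - L = s0 by lia.
    by rewrite ifF //; apply/eqP; lia.
  + move/cw_eq => []; first lia.
    move=> e1 e2. split; first lia.
    case: js IH @F hp => [|j2 js] IH /= hp.
    * left; lia.
    * right=> s0 hs0. exists (j + L + L + (j2 + s0)); split.
        rewrite size_cat size_blk; lia.
      rewrite nth_cat size_blk ifF; last lia.
      have -> : j + L + L + (j2 + s0) - (j + L + L) = j2 + s0 by lia.
      rewrite nth_cat size_blk ifT; last lia.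
      rewrite nth_blk; last lia.
      rewrite ifF; last lia. rewrite ifT; last lia.
      rewrite hnth; last lia. have -> : j2 + s0 - j2 = s0 by lia.
      by rewrite ifF //; apply/eqP; lia.
- move=> hn.
  have jsn : js != [::] by move: hp; rewrite /F; case: (js) => //= ; lia.
  have := IH jsn (p - (j + L + L)) p'.
  rewrite -/F => /(_ _ hn) []; first lia.
  move=> h1 [h2|h2]; split; try lia.
  right=> s0 /h2 [P [hP1 hP2]]. exists (j + L + L + P); split; first lia.
    rewrite nth_cat size_blk ifF; last lia.
    by have -> : j + L + L + P - (j + L + L) = P by lia.
Qed.
End Core.

Definition goodpre (i L : nat) (A : seq V) : Prop :=
 forall p p', p < size A -> nth center A p = (i, p') ->
   p + (L - p') <= size A /\
   (size A - p <= L - p' + 1 \/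
    forall s0, 0 < s0 < L -> exists P, p + (L - p') <= P < size A /\ nth center A P = (i, s0)).

Lemma goodpre_of i L cw js (E : seq V) : 0 < i -> size cw = L ->
  (forall s, s < L -> nth center cw s = if s == 0 then center else (i, s)) ->
  js != [::] -> (E = [::] \/ E = [:: center]) ->
  goodpre i L (flatten [seq blk cw j | j <- js] ++ E).
Proof.
move=> hi hsz hnth hjs hE p p'.
have hE1 : size E <= 1 by case: hE => ->.
rewrite size_cat nth_cat. set F := flatten _. have hF : F = flatten [seq blk cw j | j <- js] by []. clearbody F.
case: (ltnP p (size F)) => hpF hp.
- move=> hn. have := core hi hsz hnth hjs; rewrite -hF => /(_ _ _ hpF hn) [h1 h2].
  split; first lia.
  case: h2 => [h2|h2]; first by left; lia.
  right=> s0 /h2 [P [hP1 hP2]]; exists P; split; first lia.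
  by rewrite nth_cat ifT //; lia.
- case: hE => hE; subst E; rewrite /= in hp *; first lia.
  have -> : p - size F = 0 by lia.
  by move=> /(congr1 fst) /= e; move: hi; rewrite -e.
Qed.

Lemma decomp n ls i : 0 < i -> i < n ->
  exists A R, Pword n ls i = A ++ R /\ Pword n ls i.+1 = center :: R /\
   goodpre i (nth 0 ls i.-1) A /\ (1 < i -> size A = 1 + 2 * nth 0 ls i.-1).
Proof.
move=> hi hn.
have hsz := size_cw ls i.
have hnth := @nth_cw ls i.
have n0 : n != 0 by apply/eqP=> e; rewrite e in hn.
case: (eqVneq i 1) => [ei|ei].
- subst i.
  exists (flatten [seq blk (cyc_word ls 1) j | j <- iota 1 (2 * (1 + sumn ls))] ++ [:: center]).
  exists (flatten [seq tw ls k | k <- iota 2 (n - 1)] ++ [:: center]).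
  split; first by rewrite P_one // -catA.
  split.
    rewrite P_gen //; first (have -> : n - 2 + 1 = n - 1 by lia); first by [].
    by apply/eqP; lia.
  split => //. apply: goodpre_of => //; last by right.
- exists (flatten [seq blk (cyc_word ls i) j | j <- [:: 1]] ++ [::]).
  exists (flatten [seq tw ls k | k <- iota i.+1 (n - i)] ++ [:: center]).
  split.
    rewrite P_gen //; try (apply/eqP; lia).
    have -> : n - i + 1 = (n - i).+1 by lia.
    by rewrite /= /blk /tw /= !cats0 -!catA.
  split.
    rewrite P_gen //; try (apply/eqP; lia).
    by have -> : n - i.+1 + 1 = n - i by lia.
  split; first by apply: goodpre_of => //; left.
  move=> _; rewrite /= /blk !cats0 /= size_cat hsz; lia.
Qed.


Lemma P_window n ls j : 2 <= j <= n ->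
  exists X, Pword n ls j = X ++ (tw ls n ++ [:: center]).
Proof.
move=> /andP [h1 h2].
rewrite P_gen; try (apply/eqP; lia).
rewrite iotaD map_cat flatten_cat.
have -> : j + (n - j) = n by lia.
exists (center :: flatten [seq tw ls k | k <- iota j (n - j)]).
by rewrite /= cats0 -!catA.
Qed.

Lemma P_prefix n ls j : 1 <= j <= n ->
  exists rest, Pword n ls j = center :: cyc_word ls j ++ rest.
Proof.
move=> /andP [h1 h2].
case: (eqVneq j 1) => [->|j1].
- rewrite P_one; last by apply/eqP; lia.
  have -> : 2 * (1 + sumn ls) = (1 + sumn ls).*2.+1.-1 by lia.
  rewrite -(addn1 _) /= -/(tw ls 1) /tw.
  by eexists; rewrite /= -!catA.
- rewrite P_gen; try (apply/eqP; lia).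
  have -> : n - j + 1 = (n - j).+1 by lia.
  by eexists; rewrite /= /tw -!catA.
Qed.

Lemma map_shift (ls : seq nat) h a c :
  [seq nth 0 (h :: ls) k | k <- iota a.+1 c] = [seq nth 0 ls k | k <- iota a c].
Proof. by elim: c a => //= c IH a; rewrite IH. Qed.

Lemma sum_sub ls a c : sumn [seq nth 0 ls k | k <- iota a c] <= sumn ls.
Proof.
elim: ls a c => [|h t IH] a c.
- elim: c a => //= c IH a; rewrite nth_nil /=; exact: IH.
- case: a => [|a].
  + case: c => [//|c] /=. rewrite map_shift. have := IH 0 c; lia.
  + rewrite map_shift /=. have := IH a c; lia.
Qed.

Lemma map_pred (ls : seq nat) a c :
  [seq nth 0 ls k.-1 | k <- iota a.+1 c] = [seq nth 0 ls k | k <- iota a c].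
Proof. by elim: c a => //= c IH a; rewrite IH. Qed.

Lemma nth_le_sum ls k : nth 0 ls k <= sumn ls.
Proof. have := sum_sub ls k 1; rewrite /=; lia. Qed.

Lemma size_flat_tw ls s :
  size (flatten [seq tw ls k | k <- s]) = 2 * sumn [seq nth 0 ls k.-1 | k <- s].
Proof. elim: s => //= k s IH; rewrite size_cat IH size_tw; lia. Qed.

Lemma P_size_le n ls j : 2 <= j <= n -> size (Pword n ls j) <= 2 + 2 * sumn ls.
Proof.
move=> /andP [h1 h2].
rewrite P_gen; try (apply/eqP; lia).
rewrite /= size_cat size_flat_tw /=.
have -> : j = j.-1.+1 by lia.
rewrite map_pred. have := sum_sub ls j.-1 (n - j.-1.+1 + 1). lia.
Qed.

Lemma P_size_ge n ls j : 2 <= n -> 1 <= j <= n -> 2 * nth 0 ls n.-1 <= size (Pword n ls j).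
Proof.
move=> hn /andP [h1 h2].
case: (eqVneq j 1) => [->|j1].
- have [A [R [e1 [e2 _]]]] := @decomp n ls 1 isT hn.
  have [X eX] := @P_window n ls 2 (hn).
  rewrite e1 size_cat. move: (congr1 size e2); rewrite eX !size_cat !size_cw /=. lia.
- have [X eX] := @P_window n ls j (ltac:(apply/andP; split; lia)).
  rewrite eX !size_cat !size_cw /=; lia.
Qed.


Definition SS m := sumn (lens m).

Lemma size_lens m : size (lens m) = m.
Proof. by case: m => //= m; rewrite size_map size_iota. Qed.

Lemma Lcyc_eq m j : 1 <= j <= m -> Lcyc m j = size (Pword m.-1 (lens m.-1) j).
Proof.
move=> /andP [h1 h2]. case: m h2 => [|m] h2; first lia.
rewrite /Lcyc. have -> : lens m.+1 = [seq size (Pword m (lens m) i) | i <- iota 1 m.+1] by []. rewrite (nth_map 0) ?size_iota; last lia.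
by rewrite nth_iota; [congr (size (Pword _ _ _)); lia | lia].
Qed.

Lemma Lcyc_le_S m j : Lcyc m j <= SS m.
Proof. exact: nth_le_sum. Qed.

Lemma Lcyc_last m : 2 <= m -> Lcyc m m = (m + 1) ^ 2 * SS (m - 1).
Proof.
move=> h. rewrite Lcyc_eq; last lia.
have -> : m = (m.-1).+1 by lia.
rewrite P_last; last by apply/eqP; lia.
rewrite size_nseq /SS. congr (_ * _); [congr (_ ^ _); lia | congr (sumn (lens _)); lia].
Qed.

Lemma S_pos m : 1 <= m -> 1 <= SS m.
Proof.
move=> h. apply: leq_trans (Lcyc_le_S m 1).
rewrite Lcyc_eq; last lia.
case: (eqVneq m.-1 0) => [->|h0]; first by [].
have [rest ->] := @P_prefix m.-1 (lens m.-1) 1 (ltac:(apply/andP; split; lia)).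
by [].
Qed.

Lemma growth m j : 3 <= m -> 1 <= j <= m -> m <= Lcyc m j.
Proof.
move=> hm /andP [h1 h2].
case: (eqVneq j m) => [->|jm].
- rewrite Lcyc_last; last lia. have := @S_pos (m - 1) (ltac:(lia)). nia.
- rewrite Lcyc_eq; last lia.
  have := @P_size_ge m.-1 (lens m.-1) j (ltac:(lia)) (ltac:(apply/andP; split; lia)).
  have : nth 0 (lens m.-1) m.-1.-1 = Lcyc m.-1 m.-1 by [].
  move=> ->. rewrite Lcyc_last; last lia.
  have := @S_pos (m.-1 - 1) (ltac:(lia)). nia.
Qed.


Lemma walk m u w j s : edge m u w -> u = (j, s) -> 0 < s -> w = cv m j s.+1.
Proof.
move=> he eu hs; subst u.
case/orP: he => [/andP [/eqP e _]|]; first by move: e hs => [_ ->].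
move=> /hasP [i' _ /hasP [j' _ /andP [/eqP e1 /eqP e2]]].
move: e1; rewrite /cv; case: ifP => _.
- by move=> [_ e]; move: hs; rewrite e.
- by move=> [-> ->].
Qed.

Lemma walk_iter (xs : nat -> nat -> V) m j s :
  (forall k, Trel (xs k) (xs k.+1)) -> xs 0 m = (j, s) -> 0 < s ->
  forall t, s + t < Lcyc m j -> xs t m = (j, s + t).
Proof.
move=> hT h0 hs; elim=> [|t IH] ht; first by rewrite addn0.
rewrite (walk (hT t m) (IH _) (ltac:(lia))); last lia.
rewrite /cv ifF; first by congr (_, _); lia.
apply/negbTE/norP; split; apply/eqP; lia.
Qed.

Lemma phi_nc m j s : 0 < s -> phi m (j, s) = nth center (Pword m (lens m) j) s.
Proof. move=> hs; rewrite /phi ifF //; apply/eqP => -[_ e]; lia. Qed.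

Lemma proj_agree z w m N : inX z -> inX w -> N <= m -> z m = w m -> z N = w N.
Proof.
move=> hz hw; elim: m => [|m IH] hN e; first by have -> : N = 0 by lia.
case: (eqVneq N m.+1) => [->//|ne].
apply: IH; first lia.
by rewrite -(proj2 (hz m)) -(proj2 (hw m)) e.
Qed.

Lemma down_center z m N : inX z -> N <= m -> z m = center -> z N = center.
Proof.
move=> hz; elim: m => [|m IH] hN e; first by have -> : N = 0 by lia.
case: (eqVneq N m.+1) => [->//|ne].
apply: IH; first lia.
by rewrite -(proj2 (hz m)) e.
Qed.

Lemma down_deg z m N j : inX z -> 2 <= j -> N <= m ->
  (z m == center) || (j <= (z m).1) -> (z N == center) || (j <= (z N).1).
Proof.
move=> hz hj; elim: m => [|m IH] hN e; first by have -> : N = 0 by lia.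
case: (eqVneq N m.+1) => [->//|ne].
apply: IH; first lia.
rewrite -(proj2 (hz m)) /phi.
case: (eqVneq (z m.+1) center) => [_|nc]; first by rewrite eqxx.
move: e; rewrite (negbTE nc) /= => e.
case: (ltnP (z m.+1).2 (size (Pword m (lens m) (z m.+1).1))) => hs.
- have := allP (all_deg m (lens m) (leq_trans hj e)) _ (mem_nth center hs).
  case/orP=> [->//| h]; by rewrite (leq_trans e h) orbT.
- by rewrite nth_default // eqxx.
Qed.

Lemma down_C z m N : inX z -> 1 <= N -> N <= m ->
  (z m == center) || (N < (z m).1) -> z N = center.
Proof.
move=> hz h1 h2 e.
have := down_deg hz (ltac:(lia) : 2 <= N.+1) h2 e.
case/orP=> [/eqP //|h].
have := proj1 (hz N); rewrite /inV => /orP [/eqP //|/andP [/andP [_ h3] _]]. lia.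
Qed.

Lemma chain z m N j : inX z -> 3 <= N -> 1 <= j <= N -> N <= m ->
  z m = (j, m - N + 1) -> z N = (j, 1).
Proof.
move=> hz hN hj; elim: m => [|m IH] hm e; first lia.
case: (eqVneq N m.+1) => [eN|ne]; first by rewrite eN e; congr (_, _); lia.
apply: IH; first lia.
rewrite -(proj2 (hz m)) e phi_nc; last lia.
have [rest ->] := @P_prefix m (lens m) j (ltac:(apply/andP; split; lia)).
have hg := @growth m j (ltac:(lia)) (ltac:(apply/andP; split; lia)).
have -> : m.+1 - N + 1 = (m - N + 1).+1 by lia.
rewrite /= nth_cat size_cw ifT; last by rewrite /Lcyc in hg; lia.
rewrite nth_cw; last by rewrite /Lcyc in hg; lia.
by rewrite ifF //; apply/eqP; lia.
Qed.


Lemma in_prefix z m j s s' (A R : seq V) : inX z -> 0 < j -> 0 < s ->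
  z m.+1 = (j, s) -> z m = (j, s') ->
  Pword m (lens m) j = A ++ R -> Pword m (lens m) j.+1 = center :: R ->
  s < size A /\ nth center A s = (j, s').
Proof.
move=> hz hj hs e1 e0 eA eR.
have : nth center (A ++ R) s = (j, s') by rewrite -eA -phi_nc // -e1 (proj2 (hz m)).
rewrite nth_cat; case: ltnP => // hsA e.
have hall := all_deg m (lens m) (ltac:(lia) : 2 <= j.+1).
rewrite eR in hall.
case: (ltnP (s - size A) (size R)) => h.
- have := allP hall _ (mem_nth center (ltac:(rewrite /=; lia) : (s - size A).+1 < size (center :: R))).
  rewrite /= e => /orP [/eqP [e'] | /=]; [lia | lia].
- by move: e; rewrite nth_default // => -[e' _]; lia.
Qed.

Lemma level_data z i m p p' : inX z -> 0 < i -> i < m -> 0 < p ->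
  z m.+1 = (i, p) -> z m = (i, p') ->
  exists A R, Pword m (lens m) i = A ++ R /\ Pword m (lens m) i.+1 = center :: R /\
   p < size A /\ nth center A p = (i, p') /\
   p + (Lcyc m i - p') <= size A /\
   (size A - p <= Lcyc m i - p' + 1 \/
    forall s0, 0 < s0 < Lcyc m i -> exists P, p + (Lcyc m i - p') <= P < size A /\
       nth center A P = (i, s0)) /\
   (1 < i -> size A = 1 + 2 * Lcyc m i).
Proof.
move=> hz hi him hp e1 e0.
have [A [R [eA [eR [gp hs]]]]] := @decomp m (lens m) i hi him.
have [h1 h2] := in_prefix hz hi hp e1 e0 eA eR.
exists A, R; do 4 (split => //).
have [g1 g2] := gp p p' h1 h2. by do 2 (split => //).
Qed.

Lemma rem_big z i m p p' : inX z -> 0 < i -> i < m -> 2 <= m -> 0 < p ->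
  z m.+1 = (i, p) -> z m = (i, p') -> m <= Lcyc m.+1 i - p.
Proof.
move=> hz hi him hm hp e1 e0.
have [A [R [eA [eR [h1 [h2 [h3 _]]]]]]] := level_data hz hi him hp e1 e0.
have g := @growth m.+1 i.+1 (ltac:(lia)) (ltac:(apply/andP; split; lia)).
rewrite Lcyc_eq /= in g; last lia.
rewrite Lcyc_eq /=; last lia.
rewrite eR /= in g. rewrite eA size_cat. lia.
Qed.


Import Order.TTheory GRing.Theory Num.Theory.

Lemma deg_pos x i n0 : inX x -> 0 < i -> vdeg (x n0) = Some i ->
  (forall n m, vdeg (x n) = Some m -> i <= m) ->
  forall m, n0 <= m -> exists s, x m = (i, s) /\ 0 < s /\ i <= m.
Proof.
move=> hx hi h0 hd m hm.
have nc : x m != center.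
  apply/eqP=> e. move: h0; by rewrite /vdeg (down_center hx hm e) eqxx.
have hv : vdeg (x m) = Some (x m).1 by rewrite /vdeg (negbTE nc).
have h1 := hd _ _ hv.
have h2 : (x m).1 <= i.
  case: (leqP (x m).1 i) => // h.
  have := @down_deg x m n0 (x m).1 hx (ltac:(lia)) hm (ltac:(by rewrite leqnn orbT)).
  move: h0; rewrite /vdeg; case: eqP => // _ [->] /=; lia.
have := proj1 (hx m); rewrite /inV (negbTE nc) /= => /andP [/andP [h3 h4] /andP [h5 _]].
exists (x m).2; split; last (split; lia).
by case: (x m) h1 h2 => a b /= *; congr (_, _); lia.
Qed.

Lemma win_entries ls k : all (fun v => (v == center) || (v.1 == k)) (tw ls k ++ [:: center]).
Proof. by rewrite all_cat /= andbT /tw all_cat !all_cw. Qed.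

Lemma exists_mult w d : 0 < d -> exists k, w <= k * d < w + d.
Proof.
move=> hd; elim: w => [|w [k hk]]; first by exists 0; lia.
case: (ltnP w (k * d)) => h; first by exists k; lia.
exists k.+1; nia.
Qed.

Lemma dist_ge (a b : nat -> V) N : a N != b N -> (((2%:R : rat) ^+ N)^-1 <= dist a b)%R.
Proof.
move=> hN; rewrite /dist; case: excluded_middle_informative => [H|nH]; last first.
  by exfalso; apply: nH; exists N.
case: ex_minnP => m _ /(_ _ hN) hm.
rewrite lef_pV2 ?posrE ?exprn_gt0 //.
by rewrite ler_eXn2l // ltr1n.
Qed.


Lemma bad_case (xs ys : nat -> nat -> V) i n N K p q (A1 R1 X W : seq V) :
  (forall k, inX (xs k)) -> (forall k, Trel (xs k) (xs k.+1)) ->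
  (forall k, inX (ys k)) -> (forall k, Trel (ys k) (ys k.+1)) ->
  (forall t, K <= t -> xs t N = ys t N) ->
  0 < i -> i < n -> 1 <= N -> N < n ->
  xs 0 n.+1 = (i, p) -> 0 < p -> ys 0 n.+1 = (i.+1, q) -> 0 < q ->
  Pword n (lens n) i = A1 ++ R1 -> Pword n (lens n) i.+1 = center :: R1 ->
  p < size A1 -> K <= size A1 - p ->
  Pword n (lens n) i.+1 = X ++ W -> all (fun v => (v == center) || (v.1 == n)) W ->
  q < size X -> size A1 - p + q - 1 <= size W ->
  ys 0 N != center -> False.
Proof.
move=> hxX hxT hyX hyT hK hi hin hN1 hNn ex ep ey eq e1 e2 hpA hKa eXW hW hqX hdW hy0.
set d := size A1 - p + q - 1.
have Lx : Lcyc n.+1 i = size A1 + size R1.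
  by rewrite Lcyc_eq /=; [rewrite e1 size_cat | lia].
have Ly : Lcyc n.+1 i.+1 = size R1 + 1.
  by rewrite Lcyc_eq /=; [rewrite e2 /= addn1 | lia].
have hXW : size X + size W = size R1 + 1 by rewrite -size_cat -eXW e2 /= addn1.
have per : forall t, t < size X + size W - q -> ys t N = ys (t + d) N.
  move=> t ht.
  have yt : ys t n.+1 = (i.+1, q + t) by apply: walk_iter => //; lia.
  have xt : xs (t + d) n.+1 = (i, p + (t + d)) by apply: walk_iter => //; lia.
  have yt' : ys t n = nth center R1 (q + t - 1).
    rewrite -(proj2 (hyX t n)) yt phi_nc; last lia.
    rewrite e2; case: (q + t) (ltac:(lia) : 0 < q + t) => [//|k] _ /=; by rewrite subn1.
  have xt' : xs (t + d) n = nth center R1 (q + t - 1).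
    rewrite -(proj2 (hxX (t + d) n)) xt phi_nc; last lia.
    rewrite e1 nth_cat ifF; last lia. congr nth; lia.
  rewrite -(hK (t + d)); last lia.
  apply: (proj_agree (hyX t) (hxX (t + d)) (ltac:(lia) : N <= n)).
  by rewrite yt' xt'.
have iter : forall k, k * d < size X - q + d -> ys (k * d) N = ys 0 N.
  elim=> [//|k IH] hk.
  rewrite mulSn addnC -per; last nia.
  apply: IH; nia.
have win : forall t, size X <= q + t < size X + size W -> ys t N = center.
  move=> t ht.
  apply: (@down_C (ys t) n N (hyX t) hN1 (ltac:(lia))).
  have yt : ys t n.+1 = (i.+1, q + t) by apply: walk_iter => //; lia.
  rewrite -(proj2 (hyX t n)) yt phi_nc; last lia.
  rewrite eXW nth_cat ifF; last lia.
  have := allP hW _ (mem_nth center (ltac:(lia) : q + t - size X < size W)).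
  case/orP=> [->//|/eqP ->]; apply/orP; right; lia.
have [k hk] := @exists_mult (size X - q) d (ltac:(lia)).
have := iter k (ltac:(lia)).
rewrite win; last lia.
by move=> e; rewrite -e eqxx in hy0.
Qed.

Lemma good_case (xs ys : nat -> nat -> V) i m N K p (A R : seq V) P :
  (forall k, inX (xs k)) -> (forall k, Trel (xs k) (xs k.+1)) ->
  (forall t, K <= t -> xs t N = ys t N) ->
  (forall t, (ys t N == center) || (i.+1 <= (ys t N).1)) ->
  0 < i -> i <= N -> 3 <= N -> N <= m ->
  xs 0 m.+1 = (i, p) -> 0 < p ->
  Pword m (lens m) i = A ++ R ->
  K <= P - p -> p <= P -> P < size A -> nth center A P = (i, m - N + 1) -> False.
Proof.
move=> hxX hxT hK ylem hi hiN hN hNm ex hp eA hKP hpP hPA hnP.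
have Lx : Lcyc m.+1 i = size A + size R.
  by rewrite Lcyc_eq /=; [rewrite eA size_cat | lia].
have xt : xs (P - p) m.+1 = (i, p + (P - p)) by apply: walk_iter => //; lia.
have xt' : xs (P - p) m = (i, m - N + 1).
  rewrite -(proj2 (hxX (P - p) m)) xt phi_nc; last lia.
  by rewrite eA nth_cat ifT; [have -> : p + (P - p) = P by lia | lia].
have := chain (hxX (P - p)) hN (ltac:(lia) : 1 <= i <= N) hNm xt'.
rewrite hK // => e.
by have := ylem (P - p); rewrite e => /orP [/eqP /(congr1 snd) /= | /=]; lia.
Qed.


Unset Implicit Arguments.

Theorem lemma3p11 (x y : nat -> V) (i : nat) :
  (0 < i)%N -> inX x -> inX y -> has_deg x i -> has_deg y i.+1 ->
  forall xs ys : nat -> nat -> V, is_orbit x xs -> is_orbit y ys ->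
  exists eps : rat, (0 < eps)%R /\
    forall N : nat, exists n : nat, (N <= n)%N /\ (eps <= dist (xs n) (ys n))%R.
Proof.
move=> hi hX hY [[n0x hx0] hxd] [[n0y hy0] hyd] xs ys [ex0 hxs] [ey0 hys].
set N := n0x + n0y + i + 5.
have xpos := deg_pos hX hi hx0 hxd.
have ypos := deg_pos hY (ltac:(lia) : 0 < i.+1) hy0 hyd.
have hxX : forall k, inX (xs k) by move=> k; exact: (proj1 (hxs k)).
have hxT : forall k, Trel (xs k) (xs k.+1) by move=> k; exact: (proj2 (hxs k)).
have hyX : forall k, inX (ys k) by move=> k; exact: (proj1 (hys k)).
have hyT : forall k, Trel (ys k) (ys k.+1) by move=> k; exact: (proj2 (hys k)).
have ylem : forall t, (ys t N == center) || (i.+1 <= (ys t N).1).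
  move=> t. set m := N + t + 5.
  have [q [eq [hq _]]] := ypos m.+1 (ltac:(lia)).
  have [q' [eq' [hq' _]]] := ypos m (ltac:(lia)).
  have hr := rem_big hY (ltac:(lia) : 0 < i.+1) (ltac:(lia) : i.+1 < m) (ltac:(lia)) hq eq eq'.
  have ht : ys t m.+1 = (i.+1, q + t).
    apply: walk_iter => //; [by rewrite ey0 | lia].
  apply: (@down_deg (ys t) m.+1 N i.+1 (hyX t)) => //; first lia.
  rewrite ht; apply/orP; right => /=; lia.
have key : ~ (exists K, forall t, K <= t -> xs t N = ys t N).
  move=> [K hK].
  set m1 := N + K + 7.
  have [pa [ea [hpa _]]] := xpos m1 (ltac:(lia)).
  have [pb [eb [hpb _]]] := xpos m1.+1 (ltac:(lia)).
  have [pc [ec [hpc _]]] := xpos m1.+2 (ltac:(lia)).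
  have [pd [ed [hpd _]]] := xpos m1.+3 (ltac:(lia)).
  have rb := rem_big hX hi (ltac:(lia) : i < m1) (ltac:(lia)) hpb eb ea.
  have rc := rem_big hX hi (ltac:(lia) : i < m1.+1) (ltac:(lia)) hpc ec eb.
  have [A1 [R1 [eA1 [eR1 [hd1 [hn1 [a01 [di1 _]]]]]]]] :=
    level_data hX hi (ltac:(lia) : i < m1.+2) hpd ed ec.
  have [A2 [R2 [eA2 [eR2 [hd2 [hn2 [a02 [di2 _]]]]]]]] :=
    level_data hX hi (ltac:(lia) : i < m1.+1) hpc ec eb.
  have gN : 3 <= N by rewrite /N; lia.
  case: di2 => [bad2 | good2].
  2:{ have g := @growth m1.+1 i (ltac:(lia)) (ltac:(lia)).
      have [P [hP1 hP2]] := good2 (m1.+1 - N + 1) (ltac:(lia)).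
      apply: (@good_case xs ys i m1.+1 N K pc A2 R2 P) => //; try lia.
      by rewrite ex0. }
  case: di1 => [bad1 | good1].
  2:{ have g := @growth m1.+2 i (ltac:(lia)) (ltac:(lia)).
      have [P [hP1 hP2]] := good1 (m1.+2 - N + 1) (ltac:(lia)).
      apply: (@good_case xs ys i m1.+2 N K pd A1 R1 P) => //; try lia.
      by rewrite ex0. }
  have [qd [eyd [hqd _]]] := ypos m1.+3 (ltac:(lia)).
  have [qc [eyc [hqc _]]] := ypos m1.+2 (ltac:(lia)).
  have [A3 [R3 [eA3 [eR3 [hd3 [hn3 [_ [_ hs3]]]]]]]] :=
    level_data hY (ltac:(lia) : 0 < i.+1) (ltac:(lia) : i.+1 < m1.+2) hqd eyd eyc.
  have [X eX] := @P_window m1.+2 (lens m1.+2) i.+1 (ltac:(lia)).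
  have LA2 : Lcyc m1.+2 i = size A2 + size R2.
    by rewrite Lcyc_eq /=; [rewrite eA2 size_cat | lia].
  have LR2 : size R2 + 1 = Lcyc m1.+2 i.+1.
    by rewrite Lcyc_eq /=; [rewrite eR2 /= addn1 | lia].
  have LR2S : Lcyc m1.+2 i.+1 <= 2 + 2 * SS m1.+1.
    rewrite Lcyc_eq /=; last lia. apply: P_size_le; lia.
  have LbS : Lcyc m1.+1 i <= SS m1.+1 := Lcyc_le_S _ _.
  have Spos := @S_pos m1.+1 (ltac:(lia)).
  have LW : Lcyc m1.+2 m1.+2 = (m1.+2 + 1) ^ 2 * SS m1.+1.
    by rewrite Lcyc_last; [have -> : m1.+2 - 1 = m1.+1 by lia | lia].
  have hqX : qd < size X.
    have e : y m1.+2 = nth center (Pword m1.+2 (lens m1.+2) i.+1) qd.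
      by rewrite -phi_nc // -eyd (proj2 (hY m1.+2)).
    rewrite eX in e. move: e; rewrite nth_cat; case: ltnP => // h.
    case: (ltnP (qd - size X) (size (tw (lens m1.+2) m1.+2 ++ [:: center]))) => h2.
    - have := allP (win_entries (lens m1.+2) m1.+2) _ (mem_nth center h2).
      move=> hw e; rewrite -e eyc in hw. move: hw => /orP [/eqP /(congr1 fst) /= | /= /eqP]; lia.
    - rewrite nth_default // eyc => /(congr1 fst) /=; lia.
  apply: (@bad_case xs ys i m1.+2 N K pd qd A1 R1 X (tw (lens m1.+2) m1.+2 ++ [:: center]))
    => //; try lia.
  + by rewrite ex0.
  + by rewrite ey0.
  + exact: win_entries.
  + rewrite size_cat size_tw (_ : size [:: center] = 1) //. rewrite -/(Lcyc m1.+2 m1.+2) LW.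
    have hs3' := hs3 (ltac:(lia)). nia.
  + rewrite ey0. have [s [-> _]] := ypos N (ltac:(lia)). by [].
exists (((2%:R : rat) ^+ N)^-1)%R; split.
  by rewrite invr_gt0 exprn_gt0.
move=> N'.
case: (classic (exists t, N' <= t /\ xs t N != ys t N)) => [[t [ht hne]]|hno].
  by exists t; split => //; apply: dist_ge.
exfalso; apply: key; exists N' => t ht.
apply/eqP; apply/negPn/negP => hne; apply: hno; by exists t.
Qed.
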